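(* Let $b>1$, $p\in\mathbb{R}$, $s<pb$, and set $\tilde c_s=\frac{p^2-s^2-b^2+1}{2(pb-s)}$ and $\tilde A_s=s^2-2\tilde c_ss-1$ $(=p^2-2bp\tilde c_s-b^2)$. The following are equivalent: (1) $s\ge\tilde c_s$; (2) there exists a unique function $\tilde\psi_s$, continuous on $[1,b]$ and differentiable on $(1,b)$, with $\tilde\psi_s(1)=s$, $\tilde\psi_s(b)=p$ and $\tilde\psi_s^2-2\tilde c_sx\tilde\psi_s-x^2=\tilde A_s$ on $[1,b]$; explicitly $\tilde\psi_s(x)=\tilde c_sx+\sqrt{\tilde A_s+(1+\tilde c_s^2)x^2}$. Moreover this solution satisfies $(x\tilde\psi_s)'>0$. *)

(* Defs.v *)
From HB Require Import structures.
From mathcomp Require Import all_boot all_order all_algebra.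
From mathcomp Require Import all_classical all_reals all_analysis.
Set Implicit Arguments. Unset Strict Implicit. Unset Printing Implicit Defensive.
Import Order.TTheory GRing.Theory Num.Theory.
Import numFieldNormedType.Exports.
Local Open Scope classical_set_scope.
Local Open Scope ring_scope.

Definition ctil {R : realType} (b p s : R) : R :=
  (p ^+ 2 - s ^+ 2 - b ^+ 2 + 1) / (2 * (p * b - s)).

Definition Atil {R : realType} (b p s : R) : R :=
  s ^+ 2 - 2 * ctil b p s * s - 1.

Definition is_sol {R : realType} (b p s : R) (psi : R -> R) : Prop :=
  [/\ {within `[1, b], continuous psi},
      (forall x : R, x \in `]1, b[ -> derivable psi x 1),
      psi 1 = s, psi b = p &
      (forall x : R, x \in `[1, b] ->
         psi x ^+ 2 - 2 * ctil b p s * x * psi x - x ^+ 2 = Atil b p s)].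

(* Main.v *)
Require Import Defs.
From HB Require Import structures.
From mathcomp Require Import all_boot all_order all_algebra.
From mathcomp Require Import all_classical all_reals all_analysis.
From mathcomp Require Import ring lra.
Import Order.TTheory GRing.Theory Num.Theory.
Import numFieldNormedType.Exports.
Local Open Scope classical_set_scope.
Local Open Scope ring_scope.
Lemma c_eq {R : realType} {b p s : R} : s < p * b ->
  ctil b p s * (2 * (p * b - s)) = p ^+ 2 - s ^+ 2 - b ^+ 2 + 1.
Proof. move=> hs; rewrite /ctil divfK //; apply: lt0r_neq0; lra. Qed.

Lemma D1 {R : realType} (b p s : R) :
  Atil b p s + (1 + ctil b p s ^+ 2) = (s - ctil b p s) ^+ 2.
Proof. rewrite /Atil; ring. Qed.

Lemma Db {R : realType} {b p s : R} : s < p * b ->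
  Atil b p s + (1 + ctil b p s ^+ 2) * b ^+ 2 = (p - ctil b p s * b) ^+ 2.
Proof. move=> hs; have := c_eq hs; rewrite /Atil; set c := ctil b p s. nra. Qed.

Lemma pcb {R : realType} {b p s : R} : 1 < b -> s < p * b ->
  0 < p - ctil b p s * b.
Proof.
move=> hb hs; have h := c_eq hs; set c := ctil b p s in h *.
have h1 : 0 < p * b - s by lra.
have h2 : 0 < (p - c * b) * (2 * (p * b - s)).
  have -> : (p - c * b) * (2 * (p * b - s)) = (b - 1) * (p^+2 + s^+2) + (p - s)^+2 + b * (b^+2 - 1).
    rewrite mulrBl (mulrC c b) -mulrA h; ring.
  have : 0 <= (b - 1) * (p^+2 + s^+2) by apply: mulr_ge0; nra.
  have : 0 < b * (b^+2 - 1) by apply: mulr_gt0; nra.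
  have : 0 <= (p - s)^+2 by apply: sqr_ge0.
  lra.
by move: h2; rewrite pmulr_lgt0 //; lra.
Qed.

Lemma Dge {R : realType} (b p s x : R) : 1 <= x ->
  (s - ctil b p s) ^+ 2 <= Atil b p s + (1 + ctil b p s ^+ 2) * x ^+ 2.
Proof.
move=> hx; have := D1 b p s; set c := ctil b p s; set A := Atil b p s.
have : 1 <= x ^+ 2 by nra. have : 0 <= c^+2 by nra. nra. Qed.

Lemma Dgt {R : realType} (b p s x : R) : 1 < x ->
  0 < Atil b p s + (1 + ctil b p s ^+ 2) * x ^+ 2.
Proof.
move=> hx; have h := D1 b p s; set c := ctil b p s in h *; set A := Atil b p s in h *.
have h1 : 1 < x ^+ 2 by nra.
have h2 : 0 <= (s - c)^+2 by apply: sqr_ge0.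
have h3 : 0 <= c^+2 * (x^+2 - 1) by apply: mulr_ge0; [apply: sqr_ge0 | lra].
lra. Qed.
Definition Dfun {R : realType} (b p s : R) (x : R) :=
  Atil b p s + (1 + ctil b p s ^+ 2) * x ^+ 2.
Definition efun {R : realType} (b p s : R) (x : R) :=
  ctil b p s * x + Num.sqrt (Dfun b p s x).

Lemma Dfun_cont {R : realType} (b p s : R) : continuous (Dfun b p s).
Proof.
move=> x; rewrite /Dfun; apply: cvgD; first exact: cvg_cst.
apply: cvgM; first exact: cvg_cst.
by apply: cvgM; exact: cvg_id.
Qed.

Lemma efun_cont {R : realType} (b p s : R) : continuous (efun b p s).
Proof.
move=> x; rewrite /efun; apply: cvgD.
  by apply: cvgM; [exact: cvg_cst | exact: cvg_id].
apply: continuous_comp; first exact: Dfun_cont.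
exact: sqrt_continuous.
Qed.

Lemma Dfun_der {R : realType} (b p s x : R) : derivable (Dfun b p s) x 1.
Proof.
rewrite /Dfun; apply: derivableD; first exact: derivable_cst.
apply: derivableM; first exact: derivable_cst.
exact: exprn_derivable.
Qed.

Lemma efun_der {R : realType} (b p s x : R) : 0 < Dfun b p s x ->
  derivable (efun b p s) x 1.
Proof.
move=> hD; rewrite /efun; apply: derivableD.
  by apply: derivableM; [exact: derivable_cst | exact: derivable_id].
apply/derivable1_diffP.
apply: (@differentiable_comp _ _ _ _ (Dfun b p s) Num.sqrt).
  exact/derivable1_diffP/Dfun_der.
apply/derivable1_diffP.
by have [] := is_derive1_sqrt hD.
Qed.

Lemma efun_eq {R : realType} (b p s x : R) : 1 <= x ->
  efun b p s x ^+ 2 - 2 * ctil b p s * x * efun b p s x - x ^+ 2 = Atil b p s.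
Proof.
move=> hx; have h0 : 0 <= Dfun b p s x.
  by apply: le_trans (Dge b p s x hx); apply: sqr_ge0.
have := sqr_sqrtr h0; rewrite /efun /Dfun.
set q := Num.sqrt _; set c := ctil b p s; set A := Atil b p s => hq.
have -> : (c * x + q) ^+ 2 - 2 * c * x * (c * x + q) - x ^+ 2 = q ^+ 2 - (1 + c^+2) * x ^+ 2 by ring.
by rewrite hq; ring.
Qed.

Lemma efun1 {R : realType} (b p s : R) : ctil b p s <= s -> efun b p s 1 = s.
Proof.
move=> hc; rewrite /efun /Dfun expr1n !mulr1 D1 sqrtr_sqr ger0_norm ?subr_ge0 //.
by rewrite addrC subrK.
Qed.

Lemma efunb {R : realType} (b p s : R) : 1 < b -> s < p * b -> efun b p s b = p.
Proof.
move=> hb hs; rewrite /efun /Dfun (Db hs) sqrtr_sqr gtr0_norm ?(pcb hb hs) //.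
by rewrite mulrC addrC subrK.
Qed.

Lemma efun_sol {R : realType} (b p s : R) : 1 < b -> s < p * b ->
  ctil b p s <= s -> is_sol b p s (efun b p s).
Proof.
move=> hb hs hc; split.
- exact/continuous_subspaceT/efun_cont.
- move=> x; rewrite in_itv /= => /andP[h1 h2].
  by apply: efun_der; apply: Dgt.
- exact: efun1.
- exact: efunb.
- move=> x; rewrite in_itv /= => /andP[h1 h2]; exact: efun_eq.
Qed.
Lemma sol_uniq {R : realType} (b p s : R) (phi : R -> R) : 1 < b -> s < p * b ->
  ctil b p s <= s -> is_sol b p s phi ->
  forall x, x \in `[1, b] -> phi x = efun b p s x.
Proof.
move=> hb hs hc [cphi _ phi1 phib heq] x hx.
have hx' := hx; rewrite in_itv /= in hx'; case/andP: hx' => hx1 hxb.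
have [<-|x1] := eqVneq 1 x; first by rewrite phi1 efun1.
have {}x1 : 1 < x by rewrite lt_neqAle x1.
set c := ctil b p s.
have key : forall y, y \in `[1, b] -> (phi y - c * y) ^+ 2 = Dfun b p s y.
  move=> y hy; have := heq y hy; rewrite /Dfun -/c => <-; ring.
have hD := Dgt b p s x x1; rewrite -/(Dfun b p s x) in hD.
have hsq := sqr_sqrtr (ltW hD).
have : (phi x - c * x) ^+ 2 == Num.sqrt (Dfun b p s x) ^+ 2 by rewrite hsq key.
rewrite eqf_sqr => /orP[/eqP h|/eqP h].
  by rewrite /efun -/c -h; ring.
exfalso.
have hq : 0 < Num.sqrt (Dfun b p s x) by rewrite sqrtr_gt0.
have gx : phi x - c * x < 0 by rewrite h oppr_lt0.
have gb : 0 < phi b - c * b by rewrite phib; exact: pcb.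
have cg : {within `[x, b], continuous (phi - (fun y => c * y))}.
  apply: within_continuousB.
    apply: continuous_subspaceW cphi; move=> y /=; rewrite !in_itv /= => /andP[h1 h2].
    by apply/andP; split; lra.
  have cl : continuous (fun y : R => c * y).
    by move=> z; apply: cvgM; [exact: cvg_cst | exact: cvg_id].
  exact: continuous_subspaceT cl.
have hv : Num.min ((phi - (fun y => c * y)) x) ((phi - (fun y => c * y)) b) <= 0 <=
    Num.max ((phi - (fun y => c * y)) x) ((phi - (fun y => c * y)) b).
  rewrite /=; apply/andP; split.
    by rewrite ge_min ltW.
  by rewrite le_max; apply/orP; right; apply: ltW.
have [z hz gz] := IVT hxb cg hv.
move: hz gz; rewrite in_itv /= => /andP[hz1 hz2] /= gz.
have hzin : z \in `[1, b] by rewrite in_itv /=; apply/andP; split; lra.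
have gz' : phi z - c * z = 0 by exact: gz.
have := key z hzin; rewrite gz' expr0n /= => hD0.
have := Dgt b p s z (lt_le_trans x1 hz1); rewrite -/(Dfun b p s z) -hD0.
by rewrite ltxx.
Qed.
Lemma part2 {R : realType} (b p s : R) (psi : R -> R) : 1 < b -> s < p * b ->
  ctil b p s <= s -> is_sol b p s psi ->
  forall x, x \in `]1, b[ ->
    derivable (fun y : R => y * psi y) x 1 /\
    0 < 'D_1 (fun y : R => y * psi y) x.
Proof.
move=> hb hs hc hsol x hx.
have hsol' := hsol; case: hsol' => [_ dpsi _ _ heq].
have dp := dpsi x hx.
have hx' := hx; rewrite in_itv /= in hx'; case/andP: hx' => hx1 hxb.
have hxc : x \in `[1, b] by rewrite in_itv /=; apply/andP; split; lra.
have dM : derivable (id * psi) x 1 by apply: derivableM => //; exact: derivable_id.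
split; first exact: dM.
set c := ctil b p s.
set d := 'D_1 psi x.
have -> : 'D_1 (fun y : R => y * psi y) x = x * d + psi x.
  have -> : (fun y : R => y * psi y) = (id * psi) by [].
  by rewrite deriveM ?derive_id // -/d -[x *: d]/(x * d) -[(psi x)%:A]/(psi x * 1) mulr1.
pose G := psi ^+ 2 - (2 * c) \*o (id * psi) - id ^+ 2.
have dG : 'D_1 G x = 2 * psi x * d - 2 * c * (psi x + x * d) - 2 * x.
  rewrite /G deriveB; last 2 first.
  - apply: derivableB; first exact: derivableX.
    by apply: derivableM; [exact: derivable_cst | exact: dM].
  - exact/derivableX/derivable_id.
  rewrite deriveB; last 2 first.
  - exact: derivableX.
  - by apply: derivableM; [exact: derivable_cst | exact: dM].
  rewrite deriveX // deriveMl // deriveM //. rewrite deriveX; last first.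
    exact: (@exprn_derivable R 1 x 1).
  rewrite derive_id -/d /=.
  have sc : forall u v : R, u *: v = u * v by [].
  rewrite !sc !mulr1 !expr1; ring.
have G0 : 'D_1 G x = 0.
  rewrite (@near_eq_derive _ _ _ G (cst (Atil b p s)) x 1) ?derive_cst //.
  near=> y.
  have hy : y \in `]1, b[ by near: y; exact: near_in_itvoo.
  have hyc : y \in `[1, b].
    by move: hy; rewrite !in_itv /= => /andP[h1 h2]; apply/andP; split; lra.
  rewrite /= -(heq y hyc) /G /= -/c.
  change (psi y ^+ 2 - 2 * c * (y * psi y) - y ^+ 2 = psi y ^+ 2 - 2 * c * y * psi y - y ^+ 2).
  by rewrite !mulrA.
have hpe := sol_uniq b p s psi hb hs hc hsol x hxc.
have hD := Dgt b p s x hx1; rewrite -/(Dfun b p s x) in hD.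
set q := Num.sqrt (Dfun b p s x).
have hq : 0 < q by rewrite sqrtr_gt0.
have hq' : psi x - c * x = q.
  by rewrite hpe /efun -/c addrC addKr.
have e1 : d * q = c * psi x + x.
  rewrite -hq'; move: dG; rewrite G0 => dG; nra.
have e2 : q * (x * d + psi x) = psi x ^+ 2 + x ^+ 2.
  rewrite mulrDr mulrCA (mulrC q d) e1 -hq'; ring.
have e3 : 0 < psi x ^+ 2 + x ^+ 2.
  have : 0 <= psi x ^+ 2 by apply: sqr_ge0.
  nra.
by move: e3; rewrite -e2 pmulr_rgt0.
Unshelve. all: by end_near.
Qed.

Theorem lemma4p5 (R : realType) (b p s : R) (hb : 1 < b) (hs : s < p * b) :
  (ctil b p s <= s <->
    exists psi : R -> R,
      [/\ is_sol b p s psi,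
          (forall phi : R -> R, is_sol b p s phi ->
             forall x : R, x \in `[1, b] -> phi x = psi x) &
          (forall x : R, x \in `[1, b] ->
             psi x = ctil b p s * x
                     + Num.sqrt (Atil b p s + (1 + ctil b p s ^+ 2) * x ^+ 2))])
  /\
  (ctil b p s <= s -> forall psi : R -> R, is_sol b p s psi ->
     forall x : R, x \in `]1, b[ ->
       derivable (fun y : R => y * psi y) x 1 /\
       0 < 'D_1 (fun y : R => y * psi y) x).
Proof.
split; last by move=> hc psi hsol x hx; exact: (part2 b p s psi hb hs hc hsol x hx).
split.
  move=> hc; exists (efun b p s); split.
  - exact: efun_sol.
  - move=> phi hphi x hx; exact: sol_uniq b p s phi hb hs hc hphi x hx.
  - by move=> x _.
case=> psi [hsol _ hform].
have h1 : (1 : R) \in `[1, b] by rewrite in_itv /= lexx ltW.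
have := hform 1 h1; case: hsol => _ _ -> _ _.
rewrite expr1n !mulr1 D1 sqrtr_sqr => hs1.
have := normr_ge0 (s - ctil b p s); lra.
Qed.
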